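(* Let $J$ be an abelian topological semigroup with identity $0$, $X$ a topological vector space over $\mathbf{C}$, and $\phi\in P^n(J,X)$, so that $\phi(t+ms)=\sum_{j=0}^n a_j(t,s)m^j$ for all $t,s\in J$, $m\in\mathbf{Z}_+$, with $a_j(t,s)\in X$. Then $a_n(t,s)=a_n(0,s)$ for all $t,s\in J$.
   Context: $\mathbf{Z}_+=\{0,1,2,\dots\}$. A continuous $p:J\to X$ is a polynomial of degree at most $n$ if for all $s,t\in J$ the map $m\mapsto p(s+mt)$, $m\in\mathbf{Z}_+$, is a polynomial in $m$ of degree at most $n$ with coefficients in $X$; $P^n(J,X)$ is the space of such polynomials. *)

(* Defs.v *)
From HB Require Import structures.
From mathcomp Require Import all_boot all_order all_algebra.
From mathcomp Require Import all_classical all_reals all_analysis.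
From mathcomp Require Import complex.
Set Implicit Arguments. Unset Strict Implicit. Unset Printing Implicit Defensive.
Import Order.TTheory GRing.Theory Num.Theory.
Local Open Scope ring_scope.
Local Open Scope complex_scope.

Definition poly_seq_le (C : numDomainType) (X : lmodType C) (n : nat)
  (q : nat -> X) : Prop :=
  exists c : nat -> X, forall m : nat, q m = \sum_(j < n.+1) ((m%:R : C) ^+ j) *: c j.

Definition Pn (J : TopologicalNmodule.type) (C : numDomainType)
  (X : topologicalLmodType C) (n : nat) (p : J -> X) : Prop :=
  continuous p /\ forall s t : J, poly_seq_le n (fun m : nat => p (s + t *+ m)).

(* Main.v *)
Require Import Defs.
From HB Require Import structures.
From mathcomp Require Import all_boot all_order all_algebra.
From mathcomp Require Import all_classical all_reals all_analysis.
From mathcomp Require Import complex.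
Local Open Scope ring_scope.
Local Open Scope complex_scope.

Import Order.TTheory GRing.Theory Num.Theory.

Set Implicit Arguments. Unset Strict Implicit.
Section Diff.
Variables (C : numFieldType) (X : lmodType C).

Lemma sw (V : zmodType) (a b c d : V) : (a - b) - (c - d) = (a - c) - (b - d).
Proof. by rewrite !opprB !addrA -(addrAC a d) -(addrAC a d) addrAC. Qed.

Definition D (f : nat -> X) : nat -> X := fun m => f m.+1 - f m.
Definition D1 (F : nat -> nat -> X) : nat -> nat -> X := fun r N => F r.+1 N - F r N.
Definition D2 (F : nat -> nat -> X) : nat -> nat -> X := fun r N => F r N.+1 - F r N.

Lemma Dsum (I : finType) (f : I -> nat -> X) :
  D (fun r => \sum_i f i r) = fun r => \sum_i D (f i) r.
Proof. by apply: funext => r; rewrite /D sumrB. Qed.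

Lemma iterDsum (I : finType) d (f : I -> nat -> X) :
  iter d D (fun r => \sum_i f i r) = fun r => \sum_i iter d D (f i) r.
Proof.
elim: d => [//|d IH]; rewrite iterS IH Dsum.
by apply: funext => r; apply: eq_bigr => i _; rewrite iterS.
Qed.

Lemma D0 d : iter d D (fun _ => 0) = fun _ => 0.
Proof. by elim: d => [//|d IH]; rewrite iterS IH /D; apply: funext => r; rewrite subr0. Qed.

Lemma Dmon j (c : X) : D (fun r => (r%:R : C) ^+ j *: c) =
  fun r => \sum_(i < j) (r%:R : C) ^+ i *: ('C(j, i)%:R *: c).
Proof.
apply: funext => r; rewrite /D -scalerBl -natr1 exprD1n big_ord_recr /= binn mulr1n.
rewrite addrK scaler_suml; apply: eq_bigr => i _.
by rewrite scalerA mulr_natr.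
Qed.

Lemma A1 d : forall j (c : X), (j < d)%N -> iter d D (fun r => (r%:R : C) ^+ j *: c) = fun _ => 0.
Proof.
elim: d => [//|d IH] j c hj.
rewrite iterSr Dmon iterDsum; apply: funext => r.
by apply: big1 => i _; rewrite IH //; apply: leq_trans (ltn_ord i) _.
Qed.

Lemma A2 d : forall (c : X), iter d D (fun r => (r%:R : C) ^+ d *: c) = fun _ => d`!%:R *: c.
Proof.
elim: d => [|d IH] c.
  by apply: funext => r /=; rewrite expr0 !scale1r.
rewrite iterSr Dmon iterDsum; apply: funext => r.
rewrite big_ord_recr /= big1 ?add0r; last by move=> i _; rewrite A1.
by rewrite IH scalerA binSn -natrM factS mulnC.
Qed.

Definition polyle n (q : nat -> X) :=
  exists c : nat -> X, forall m : nat, q m = \sum_(j < n.+1) ((m%:R : C) ^+ j) *: c j.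

Lemma A_top n (c : nat -> X) :
  iter n D (fun m => \sum_(j < n.+1) ((m%:R : C) ^+ j) *: c j) = fun _ => n`!%:R *: c n.
Proof.
rewrite iterDsum; apply: funext => r.
rewrite big_ord_recr /= big1 ?add0r; last by move=> i _; rewrite A1.
by rewrite A2.
Qed.

Lemma A_kill n q : polyle n q -> iter n.+1 D q = fun _ => 0.
Proof.
move=> [c hc]; have -> : q = (fun m => \sum_(j < n.+1) ((m%:R : C) ^+ j) *: c j).
  exact: funext.
rewrite iterDsum; apply: funext => r; apply: big1 => i _; by rewrite A1.
Qed.

Lemma polyleB n q1 q2 : polyle n q1 -> polyle n q2 -> polyle n (fun m => q1 m - q2 m).
Proof.
move=> [c1 h1] [c2 h2]; exists (fun j => c1 j - c2 j) => m.
by rewrite h1 h2 -sumrB; apply: eq_bigr => i _; rewrite scalerBr.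
Qed.

Lemma iterD1 k F r N : iter k D1 F r N = iter k D (fun r => F r N) r.
Proof.
elim: k r => [//|k IH] r; rewrite !iterS /D1 /D !IH //.
Qed.

Lemma iterD2 k F r N : iter k D2 F r N = iter k D (F r) N.
Proof.
elim: k N => [//|k IH] N; rewrite !iterS /D2 /D !IH //.
Qed.

Lemma D12 F : D1 (D2 F) = D2 (D1 F).
Proof.
apply: funext => r; apply: funext => N; rewrite /D1 /D2.
exact: sw.
Qed.

Lemma iterD12 a b F : iter a D1 (iter b D2 F) = iter b D2 (iter a D1 F).
Proof.
have h1 : forall b G, D1 (iter b D2 G) = iter b D2 (D1 G).
  by elim=> [//|b' IH] G; rewrite !iterS D12 IH.
elim: a F => [//|a IH] F.
by rewrite iterS IH h1 -iterS.
Qed.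

Lemma polyle_iterD2 n V : (forall m, polyle n (fun r => V r m)) ->
  forall k m, polyle n (fun r => iter k D2 V r m).
Proof.
move=> hV; elim=> [|k IH] m /=; first exact: hV.
rewrite /D2; apply: polyleB; exact: IH.
Qed.

Lemma B k : forall N (b : nat -> X),
  (forall r, iter k.+1 D (fun r => \sum_(i < N) (r%:R : C) ^+ (k + i) *: b i) r = 0) ->
  forall i, (0 < i < N)%N -> b i = 0.
Proof.
elim=> [b h i /andP[_ //]|N IH] b h i /andP[hi0 hiN].
case: N IH h hiN => [|N] IH h hiN; first by case: i hi0 hiN => [|[]].
have hbN : b N.+1 = 0.
  have e1 := iterD N k.+1 D (fun r => \sum_(i < N.+2) (r%:R : C) ^+ (k + i) *: b i).
  have e2 : iter k.+1 D (fun r => \sum_(i < N.+2) (r%:R : C) ^+ (k + i) *: b i) = fun _ => 0.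
    exact: funext.
  rewrite e2 D0 addnS -addSn addnC iterDsum in e1.
  have e3 := congr1 (fun f => f 0%N) e1; simpl in e3.
  rewrite big_ord_recr /= big1 ?add0r in e3; last first.
    by move=> j _; rewrite A1 // ltn_add2l.
  rewrite A2 in e3.
  have hf : ((k + N.+1)`!%:R : C) != 0 by rewrite pnatr_eq0 -lt0n fact_gt0.
  by rewrite -[b _](scalerK hf) e3 scaler0.
case/boolP: (i == N.+1) => [/eqP -> //|hne].
apply: (IH b) => [r|]; last by rewrite hi0 /= ltn_neqAle hne -ltnS.
have E : (fun r => \sum_(i < N.+2) (r%:R : C) ^+ (k + i) *: b i) =
   (fun r => \sum_(i < N.+1) (r%:R : C) ^+ (k + i) *: b i).
  by apply: funext => r'; rewrite big_ord_recr /= hbN scaler0 addr0.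
by rewrite -E; exact: h.
Qed.

Lemma D2zero k : iter k D2 (fun _ _ => 0) = fun _ _ => 0.
Proof.
elim: k => [//|k IH]; rewrite iterS IH /D2.
by apply: funext => r; apply: funext => N; rewrite subr0.
Qed.

End Diff.
Unset Implicit Arguments. Set Strict Implicit.

Theorem lemma2p1 (R : realType) (J : TopologicalNmodule.type)
  (X : topologicalLmodType R[i]) (n : nat) (phi : J -> X)
  (a : nat -> J -> J -> X) :
  Pn n phi ->
  (forall (t s : J) (m : nat),
      phi (t + s *+ m) = \sum_(j < n.+1) ((m%:R : R[i]) ^+ j) *: a j t s) ->
  forall t s : J, a n t s = a n 0 s.
Proof.
move=> [_ hP] ha t s.
pose V := fun r m => phi (t *+ r + s *+ m).
have hV : forall m, polyle n (fun r => V r m).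
  move=> m; have [c hc] := hP (s *+ m) t; exists c => r.
  by rewrite /V addrC hc.
have [bb hbb] := polyle_iterD2 hV n 0.
have hu2 : forall r, iter n (D2 (X:=X)) V r 0 = n`!%:R *: a n (t *+ r) s.
  move=> r; rewrite iterD2.
  have -> : V r = fun m => \sum_(j < n.+1) ((m%:R : R[i]) ^+ j) *: a j (t *+ r) s.
    by apply: funext => m; rewrite /V ha.
  by rewrite (A_top n (fun j => a j (t *+ r) s)).
pose W := fun r N => phi (t *+ r + s *+ (N * r)).
have hW1 : forall N, polyle n (fun r => W r N).
  move=> N; have [c hc] := hP 0 (t + s *+ N); exists c => r.
  by rewrite /W -hc add0r mulrnDl mulrnA.
have hW2 : forall r, iter n (D2 (X:=X)) W r 0 =
    \sum_(i < n.+1) ((r%:R : R[i]) ^+ (n + i)) *: bb i.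
  move=> r; rewrite iterD2.
  have -> : W r = fun N => \sum_(j < n.+1) ((N%:R : R[i]) ^+ j) *:
        (((r%:R : R[i]) ^+ j) *: a j (t *+ r) s).
    apply: funext => N; rewrite /W ha; apply: eq_bigr => j _.
    by rewrite scalerA natrM exprMn.
  rewrite (A_top n (fun j => ((r%:R : R[i]) ^+ j) *: a j (t *+ r) s)) /= scalerA mulrC -scalerA -hu2 hbb scaler_sumr.
  by apply: eq_bigr => i _; rewrite scalerA -exprD.
have hz : forall r, iter n.+1 (D (X:=X))
    (fun r => \sum_(i < n.+1) ((r%:R : R[i]) ^+ (n + i)) *: bb i) r = 0.
  move=> r.
  have <- : (fun r => iter n (D2 (X:=X)) W r 0) =
     (fun r => \sum_(i < n.+1) ((r%:R : R[i]) ^+ (n + i)) *: bb i).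
    by apply: funext => r'; rewrite hW2.
  rewrite -iterD1 iterD12.
  have -> : iter n.+1 (D1 (X:=X)) W = fun _ _ => 0.
    apply: funext => r'; apply: funext => N.
    by rewrite iterD1 (A_kill (hW1 N)).
  by rewrite D2zero.
have hb0 := B hz.
have hconst : forall r, n`!%:R *: a n (t *+ r) s = bb 0%N.
  move=> r; rewrite -hu2 hbb big_ord_recl big1 ?addr0.
    by rewrite expr0 scale1r.
  by move=> i _; rewrite hb0 ?scaler0 //= ltnS ltn_ord.
have hf : (n`!%:R : R[i]) != 0 by rewrite pnatr_eq0 -lt0n fact_gt0.
have e := hconst 1%N; rewrite -(hconst 0%N) mulr1n mulr0n in e.
by rewrite -[a n t s](scalerK hf) e scalerK.
Qed.
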